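(* Let $m,n$ be positive integers with at least one of $m,n$ greater than $1$. The pseudograph $\mathcal{K}_{m,n}$ admits a cylindrical knight's tour if and only if neither of the following holds: (i) $m=2$ and $n=2$; (ii) $m$ is odd and $n$ is even.
   Context: Let $\mathcal{P}$ be the graph with vertex set $\mathbb{Z}^2$ in which $(a,b)$ and $(a',b')$ are adjacent iff $\{|a-a'|,|b-b'|\}=\{1,2\}$. For positive integers $m,n$ let $G$ be the group of automorphisms of $\mathcal{P}$ generated by $\tau(a,b)=(a+m,b)$ and $\sigma(a,b)=(m-1-a,\,b+n)$; it acts freely, and the knight's pseudograph of the $m\times n$ Klein bottle board is $\mathcal{K}_{m,n}=\mathcal{P}/G$ (vertices and edges are orbits; multiple edges and loops may occur), with covering map $\phi_K:\mathcal{P}\to\mathcal{K}_{m,n}$. A knight's tour is a closed walk visiting every vertex exactly once apart from the repeated start/end vertex (a Hamiltonian cycle). Regard a tour as a closed walk starting and ending at vertex $(0,0)$; it lifts uniquely to a walk in $\mathcal{P}$ starting at $(0,0)$. The tour is cylindrical if this lift ends at $(m,0)$ or $(-m,0)$ (equivalently, its homotopy class is the image of a generator of the fundamental group of the cylinder obtained by identifying only the left and right sides of the board). *)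

(* Defs.v *)
From Stdlib Require Import ZArith Relations Arith.
Open Scope Z_scope.

Definition knight_adj (p q : Z * Z) : Prop :=
  let da := Z.abs (fst p - fst q) in
  let db := Z.abs (snd p - snd q) in
  (da = 1 /\ db = 2) \/ (da = 2 /\ db = 1).

Definition tau (m : Z) (p : Z * Z) : Z * Z := (fst p + m, snd p).
Definition sigma (m n : Z) (p : Z * Z) : Z * Z := (m - 1 - fst p, snd p + n).

(* p and q lie in the same G-orbit, G = <tau, sigma>: the equivalence
   closure of the generator steps.  Vertices of K_{m,n} are these orbits,
   and phi_K p = phi_K q iff same_orbit m n p q. *)
Definition gen_step (m n : Z) (p q : Z * Z) : Prop :=
  q = tau m p \/ q = sigma m n p.

Definition same_orbit (m n : Z) : relation (Z * Z) :=
  clos_refl_sym_trans (Z * Z) (gen_step m n).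

(* A knight's tour of K_{m,n}, regarded as a closed walk from the vertex
   phi_K(0,0), given through its unique lift w to P starting at (0,0):
   w 0, ..., w (m*n) is a walk in P; the projected closed walk has length
   m*n (= number of vertices of K_{m,n}); its first m*n vertices are pairwise
   distinct and cover every vertex; it returns to its start. *)
Definition tour_lift (m n : nat) (w : nat -> Z * Z) : Prop :=
  let mZ := Z.of_nat m in
  let nZ := Z.of_nat n in
  let N := (m * n)%nat in
  w 0%nat = (0, 0) /\
  (forall i, (i < N)%nat -> knight_adj (w i) (w (S i))) /\
  (forall i j, (i < N)%nat -> (j < N)%nat ->
      same_orbit mZ nZ (w i) (w j) -> i = j) /\
  (forall q, exists i, (i < N)%nat /\ same_orbit mZ nZ q (w i)) /\
  same_orbit mZ nZ (w N) (w 0%nat).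

Definition has_cylindrical_tour (m n : nat) : Prop :=
  exists w : nat -> Z * Z,
    tour_lift m n w /\
    (w (m * n)%nat = (Z.of_nat m, 0) \/ w (m * n)%nat = (- Z.of_nat m, 0)).

(* Main.v *)
Require Import Defs.
From Stdlib Require Import ZArith Relations Arith Lia Bool FinFun List.
Open Scope Z_scope.


Definition cfr (n:Z) (p:Z*Z) := snd p mod n.
Definition cfx (m n:Z) (p:Z*Z) :=
  if Z.even (snd p / n) then fst p mod m else (m - 1 - fst p) mod m.

Lemma gen_step_cf m n p q : 0 < m -> 0 < n -> gen_step m n p q ->
  cfr n p = cfr n q /\ cfx m n p = cfx m n q.
Proof.
  intros Hm Hn [H|H]; subst q; destruct p as [a b]; unfold cfr, cfx, tau, sigma; simpl.
  - split; [reflexivity|].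
    replace (m - 1 - (a + m)) with ((m-1-a) + (-1)*m) by ring.
    replace (a + m) with (a + 1*m) by ring.
    rewrite !Z.mod_add by lia. reflexivity.
  - split.
    + replace (b + n) with (b + 1*n) by ring. rewrite Z.mod_add by lia. reflexivity.
    + replace (b + n) with (b + 1*n) by ring. rewrite Z.div_add by lia.
      rewrite Z.even_add. simpl.
      destruct (Z.even (b/n)); simpl.
      * replace (m - 1 - (m - 1 - a)) with a by ring. reflexivity.
      * reflexivity.
Qed.

Lemma orbit_cf m n p q : 0 < m -> 0 < n -> same_orbit m n p q ->
  cfr n p = cfr n q /\ cfx m n p = cfx m n q.
Proof.
  intros Hm Hn H. induction H.
  - apply gen_step_cf; auto.
  - auto.
  - destruct IHclos_refl_sym_trans; auto.
  - destruct IHclos_refl_sym_trans1, IHclos_refl_sym_trans2; split; congruence.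
Qed.

Lemma orbit_tau m n a b k : same_orbit m n (a, b) (a + k*m, b).
Proof.
  revert a. induction k using Z.peano_ind; intro a.
  - replace (a + 0*m) with a by ring. apply rst_refl.
  - eapply rst_trans. apply (IHk a).
    apply rst_step. left. unfold tau. simpl. f_equal. unfold Z.succ, Z.pred; ring.
  - eapply rst_trans. apply (IHk a).
    apply rst_sym, rst_step. left. unfold tau. simpl. f_equal. unfold Z.succ, Z.pred; ring.
Qed.

Lemma orbit_sig m n a b : same_orbit m n (a, b) (m-1-a, b+n).
Proof. apply rst_step. right. reflexivity. Qed.

Lemma mm1 m a : m - 1 - (m - 1 - a) = a. Proof. ring. Qed.

Lemma orbit_canon_aux m n a r q :
  same_orbit m n (a, n*q + r) (if Z.even q then a else m-1-a, r).
Proof.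
  revert a. induction q using Z.peano_ind; intro a.
  - simpl. replace (n*0+r) with r by ring. apply rst_refl.
  - apply rst_trans with (y := (m-1-a, n*q+r)).
    + apply rst_sym. replace (n * Z.succ q + r) with ((n*q+r) + n) by (unfold Z.succ; ring).
      pattern a at 2. rewrite <- (mm1 m a). apply orbit_sig.
    + specialize (IHq (m-1-a)). rewrite mm1 in IHq.
      rewrite Z.even_succ, <- Z.negb_even.
      destruct (Z.even q); exact IHq.
  - apply rst_trans with (y := (m-1-a, n*q+r)).
    + replace (n*q+r) with ((n*Z.pred q+r) + n) by (unfold Z.pred; ring).
      apply orbit_sig.
    + specialize (IHq (m-1-a)). rewrite mm1 in IHq.
      rewrite Z.even_pred, <- Z.negb_even.
      destruct (Z.even q); exact IHq.
Qed.

Lemma orbit_canon m n p : 0 < m -> 0 < n ->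
  same_orbit m n p (cfx m n p, cfr n p).
Proof.
  intros Hm Hn. destruct p as [a b]. unfold cfx, cfr; simpl.
  rewrite (Z.div_mod b n) at 1 by lia.
  eapply rst_trans. apply orbit_canon_aux.
  set (x := if Z.even (b/n) then a else m-1-a).
  replace (if Z.even (b / n) then a mod m else (m - 1 - a) mod m) with (x mod m)
    by (unfold x; destruct (Z.even (b/n)); reflexivity).
  replace (x mod m) with (x + (-(x/m))*m) by (rewrite Z.mod_eq by lia; ring).
  apply orbit_tau.
Qed.

Lemma cf_range m n p : 0 < m -> 0 < n ->
  0 <= cfr n p < n /\ 0 <= cfx m n p < m.
Proof.
  intros Hm Hn. unfold cfr, cfx. split. apply Z.mod_pos_bound; lia.
  destruct (Z.even _); apply Z.mod_pos_bound; lia.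
Qed.

Definition code (m n : Z) (p : Z*Z) : nat := Z.to_nat (cfr n p * m + cfx m n p).

Lemma tour_of (m n : nat) (w : nat -> Z*Z) :
  (0 < m)%nat -> (0 < n)%nat ->
  w 0%nat = (0,0) ->
  (forall i, (i < m*n)%nat -> knight_adj (w i) (w (S i))) ->
  (w (m*n)%nat = (Z.of_nat m, 0) \/ w (m*n)%nat = (- Z.of_nat m, 0)) ->
  (forall i j, (i < m*n)%nat -> (j < m*n)%nat ->
     cfr (Z.of_nat n) (w i) = cfr (Z.of_nat n) (w j) ->
     cfx (Z.of_nat m) (Z.of_nat n) (w i) = cfx (Z.of_nat m) (Z.of_nat n) (w j) -> i = j) ->
  has_cylindrical_tour m n.
Proof.
  intros Hm Hn H0 Hadj Hend Hinj.
  set (mZ := Z.of_nat m) in *. set (nZ := Z.of_nat n) in *.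
  assert (HmZ : 0 < mZ) by (unfold mZ; lia).
  assert (HnZ : 0 < nZ) by (unfold nZ; lia).
  exists w. split; [|exact Hend].
  unfold tour_lift. fold mZ nZ.
  split; [exact H0|]. split; [exact Hadj|]. split.
  - intros i j Hi Hj Ho. apply orbit_cf in Ho; auto. destruct Ho; auto.
  - split.
    + intro q.
      assert (Hsurj : bSurjective (m*n) (fun i => code mZ nZ (w i))).
      { apply bInjective_bSurjective.
        - intros i Hi. unfold code.
          destruct (cf_range mZ nZ (w i)) as [[? ?] [? ?]]; auto.
          assert (cfr nZ (w i) * mZ + cfx mZ nZ (w i) < mZ * nZ) by nia.
          rewrite Nat2Z.inj_lt, Z2Nat.id by lia. rewrite Nat2Z.inj_mul. fold mZ nZ. lia.
        - intros i j Hi Hj E. unfold code in E.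
          destruct (cf_range mZ nZ (w i)) as [[? ?] [? ?]]; auto.
          destruct (cf_range mZ nZ (w j)) as [[? ?] [? ?]]; auto.
          apply Z2Nat.inj in E; try nia.
          assert (cfr nZ (w i) = cfr nZ (w j)) by nia.
          apply Hinj; auto. nia. }
      destruct (cf_range mZ nZ q) as [[? ?] [? ?]]; auto.
      destruct (Hsurj (code mZ nZ q)) as [i [Hi Ei]].
      { unfold code. rewrite Nat2Z.inj_lt, Z2Nat.id by lia. rewrite Nat2Z.inj_mul. fold mZ nZ. nia. }
      exists i. split; auto.
      unfold code in Ei.
      destruct (cf_range mZ nZ (w i)) as [[? ?] [? ?]]; auto.
      apply Z2Nat.inj in Ei; try nia.
      assert (E1 : cfr nZ (w i) = cfr nZ q) by nia.
      assert (E2 : cfx mZ nZ (w i) = cfx mZ nZ q) by nia.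
      eapply rst_trans. apply orbit_canon; auto.
      rewrite <- E1, <- E2. apply rst_sym, orbit_canon; auto.
    + rewrite H0. destruct Hend as [E|E]; rewrite E.
      * apply rst_sym, rst_step. left. reflexivity.
      * apply rst_step. left. unfold tau. simpl. f_equal. ring.
Qed.


Lemma mod_eq_diff a b m : m <> 0 -> a mod m = b mod m -> exists t, a - b = m * t.
Proof.
  intros Hm E. exists (a/m - b/m).
  rewrite (Z.div_mod a m Hm) at 1. rewrite (Z.div_mod b m Hm) at 1. rewrite E. ring.
Qed.

Lemma modm_mods a b s K : 0 < s -> 0 < K -> a mod (s*K) = b mod (s*K) -> a mod s = b mod s.
Proof.
  intros Hs HK E. apply mod_eq_diff in E; [|nia]. destruct E as [t Et].
  replace a with (b + (K*t)*s) by nia. apply Z.mod_add. lia.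
Qed.

Lemma modm_q c d q q' s K : 0 < s -> 0 < K -> 0 <= q < K -> 0 <= q' < K ->
  (c + d * s*q) mod (s*K) = (c + d * s*q') mod (s*K) -> (d = 1 \/ d = -1) -> q = q'.
Proof.
  intros Hs HK Hq Hq' E Hd. apply mod_eq_diff in E; [|nia]. destruct E as [t Et].
  assert (d*(q - q') = K*t).
  { apply (Z.mul_reg_l _ _ s); [lia|].
    replace (s*(d*(q-q'))) with (c + d*s*q - (c + d*s*q')) by ring. rewrite Et. ring. }
  destruct (Z.lt_trichotomy t 0) as [Ht|[Ht|Ht]]; destruct Hd; subst d; try nia.
Qed.

Section Line.
Variables (m n P K : nat) (s : Z) (X Y : nat -> Z).
Hypotheses (HP : (0 < P)%nat) (HK : (0 < K)%nat) (Hs : 0 < s) (Hn : (0 < n)%nat)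
  (HsK : s * Z.of_nat K = Z.of_nat m) (HPK : (P * K = m * n)%nat)
  (HX0 : X 0%nat = 0) (HY0 : Y 0%nat = 0)
  (Hadj : forall j, (S j < P)%nat -> knight_adj (X j, Y j) (X (S j), Y (S j)))
  (Hclose : knight_adj (X (P-1)%nat, Y (P-1)%nat) (s, 0)).

Definition lkey (j : nat) : Z :=
  if Z.even (Y j / Z.of_nat n) then X j else -1 - X j.

Hypothesis Hkey : forall j j', (j < P)%nat -> (j' < P)%nat ->
  Y j mod Z.of_nat n = Y j' mod Z.of_nat n -> lkey j mod s = lkey j' mod s -> j = j'.

Definition lw (i : nat) : Z * Z :=
  (s * Z.of_nat (i / P) + X (i mod P), Y (i mod P)).

Lemma divmod_nat q j : (j < P)%nat -> ((P*q + j)/P = q /\ (P*q+j) mod P = j)%nat.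
Proof.
  intro Hj. split.
  - symmetry. apply (Nat.div_unique _ _ _ j); lia.
  - symmetry. apply (Nat.mod_unique _ _ q); lia.
Qed.

Lemma line_tour : has_cylindrical_tour m n.
Proof.
  assert (Hm : (0 < m)%nat) by lia.
  apply (tour_of m n lw); auto.
  - unfold lw. rewrite Nat.Div0.div_0_l, Nat.Div0.mod_0_l by lia. simpl. rewrite HX0, HY0. f_equal; ring.
  - intros i _. unfold lw.
    pose proof (Nat.div_mod i P ltac:(lia)) as Ei.
    pose proof (Nat.mod_upper_bound i P ltac:(lia)) as Bi.
    set (q := (i / P)%nat) in *. set (j := (i mod P)%nat) in *.
    destruct (Nat.lt_ge_cases (S j) P) as [Hj|Hj].
    + destruct (divmod_nat q (S j) Hj) as [E1 E2].
      replace (S i) with (P*q + S j)%nat by lia. rewrite E1, E2.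
      specialize (Hadj j Hj). unfold knight_adj in *. simpl in *.
      replace (s * Z.of_nat q + X j - (s * Z.of_nat q + X (S j))) with (X j - X (S j)) by ring.
      exact Hadj.
    + assert (j = P - 1)%nat by lia.
      destruct (divmod_nat (S q) 0 HP) as [E1 E2].
      replace (S i) with (P*(S q) + 0)%nat by lia. rewrite E1, E2.
      rewrite HX0, HY0. rewrite H in *.
      unfold knight_adj in *. cbn [fst snd] in *.
      replace (s * Z.of_nat q + X (P - 1)%nat - (s * Z.of_nat (S q) + 0)) with (X (P-1)%nat - s) by lia.
      replace (Y (P-1)%nat - 0) with (Y (P-1)%nat - 0) by ring. exact Hclose.
  - left. unfold lw. rewrite <- HPK.
    destruct (divmod_nat K 0 HP) as [E1 E2]. rewrite Nat.add_0_r in E1, E2.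
    rewrite E1, E2, HX0, HY0. f_equal. lia.
  - intros i i' Hi Hi'.
    pose proof (Nat.div_mod i P ltac:(lia)) as Ei.
    pose proof (Nat.mod_upper_bound i P ltac:(lia)) as Bi.
    pose proof (Nat.div_mod i' P ltac:(lia)) as Ei'.
    pose proof (Nat.mod_upper_bound i' P ltac:(lia)) as Bi'.
    assert (Hq : (i / P < K)%nat) by (apply Nat.div_lt_upper_bound; lia).
    assert (Hq' : (i' / P < K)%nat) by (apply Nat.div_lt_upper_bound; lia).
    unfold lw, cfr, cfx. simpl.
    set (q := (i / P)%nat) in *. set (j := (i mod P)%nat) in *.
    set (q' := (i' / P)%nat) in *. set (j' := (i' mod P)%nat) in *.
    intros Er Ex.
    assert (HsK' : 0 < Z.of_nat K) by lia.
    rewrite <- HsK in Ex.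
    assert (Hjj : j = j').
    { apply Hkey; auto. unfold lkey.
      destruct (Z.even (Y j / Z.of_nat n)) eqn:Ej, (Z.even (Y j' / Z.of_nat n)) eqn:Ej';
        apply modm_mods in Ex; auto.
      - replace (s * Z.of_nat q + X j) with (X j + Z.of_nat q * s) in Ex by ring.
        replace (s * Z.of_nat q' + X j') with (X j' + Z.of_nat q' * s) in Ex by ring.
        rewrite !Z.mod_add in Ex by lia. exact Ex.
      - replace (s * Z.of_nat q + X j) with (X j + Z.of_nat q * s) in Ex by ring.
        replace (s * Z.of_nat K - 1 - (s * Z.of_nat q' + X j')) with ((-1 - X j') + (Z.of_nat K - Z.of_nat q') * s) in Ex by ring.
        rewrite !Z.mod_add in Ex by lia. exact Ex.
      - replace (s * Z.of_nat q' + X j') with (X j' + Z.of_nat q' * s) in Ex by ring.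
        replace (s * Z.of_nat K - 1 - (s * Z.of_nat q + X j)) with ((-1 - X j) + (Z.of_nat K - Z.of_nat q) * s) in Ex by ring.
        rewrite !Z.mod_add in Ex by lia. exact Ex.
      - replace (s * Z.of_nat K - 1 - (s * Z.of_nat q + X j)) with ((-1 - X j) + (Z.of_nat K - Z.of_nat q) * s) in Ex by ring.
        replace (s * Z.of_nat K - 1 - (s * Z.of_nat q' + X j')) with ((-1 - X j') + (Z.of_nat K - Z.of_nat q') * s) in Ex by ring.
        rewrite !Z.mod_add in Ex by lia. exact Ex. }
    rewrite <- Hjj in Ex.
    assert (Hqq : Z.of_nat q = Z.of_nat q').
    { destruct (Z.even (Y j / Z.of_nat n)).
      - apply (modm_q (X j) 1 _ _ s (Z.of_nat K)); auto; try lia.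
        replace (X j + 1 * s * Z.of_nat q) with (s * Z.of_nat q + X j) by ring.
        replace (X j + 1 * s * Z.of_nat q') with (s * Z.of_nat q' + X j) by ring. exact Ex.
      - apply (modm_q (s * Z.of_nat K - 1 - X j) (-1) _ _ s (Z.of_nat K)); auto; try lia.
        replace (s * Z.of_nat K - 1 - X j + -1 * s * Z.of_nat q) with (s * Z.of_nat K - 1 - (s * Z.of_nat q + X j)) by ring.
        replace (s * Z.of_nat K - 1 - X j + -1 * s * Z.of_nat q') with (s * Z.of_nat K - 1 - (s * Z.of_nat q' + X j)) by ring. exact Ex. }
    apply Nat2Z.inj in Hqq. lia.
Qed.

End Line.


Definition AX (h : nat) (j : nat) : Z :=
  if (j <=? h)%nat then Z.of_nat j else 2 * Z.of_nat h + 3 - Z.of_nat j.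
Definition AY (h : nat) (j : nat) : Z :=
  if (j <=? h)%nat then 2 * Z.of_nat j else 4 * Z.of_nat h + 1 - 2 * Z.of_nat j.

Lemma caseA (m h : nat) : (0 < m)%nat -> (0 < h)%nat -> has_cylindrical_tour m (2*h+1).
Proof.
  intros Hm Hh.
  apply (line_tour m (2*h+1) (2*h+1) m 1 (AX h) (AY h)); try lia.
  - unfold AX. simpl. reflexivity.
  - unfold AY. simpl. reflexivity.
  - intros j Hj. unfold AX, AY, knight_adj.
    destruct (Nat.leb_spec j h); destruct (Nat.leb_spec (S j) h); cbn [fst snd]; lia.
  - unfold AX, AY, knight_adj.
    destruct (Nat.leb_spec (2*h+1-1) h); cbn [fst snd]; lia.
  - intros j j' Hj Hj' E _.
    assert (Hr : forall jj, (jj < 2*h+1)%nat -> 0 <= AY h jj < Z.of_nat (2*h+1)).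
    { intros jj Hjj. unfold AY. destruct (Nat.leb_spec jj h); lia. }
    rewrite !Z.mod_small in E by (apply Hr; auto).
    unfold AY in E. destruct (Nat.leb_spec j h); destruct (Nat.leb_spec j' h); lia.
Qed.

Definition BX (n : nat) (j : nat) : Z :=
  if (j <=? n - 3)%nat then (if Nat.even j then 0 else 2) else (if Nat.even j then 3 else 1).
Definition BY (n : nat) (j : nat) : Z :=
  if (j <=? n - 3)%nat then Z.of_nat j else 2 * Z.of_nat n - 3 - Z.of_nat j.

Lemma even_S j : Nat.even (S j) = negb (Nat.even j).
Proof. rewrite Nat.even_succ, <- Nat.negb_even. reflexivity. Qed.

Lemma div_m1 y n : 0 < n -> -n <= y < 0 -> y / n = -1.
Proof. intros. symmetry. apply (Z.div_unique _ _ _ (y + n)); lia. Qed.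
Lemma mod_m1 y n : 0 < n -> -n <= y < 0 -> y mod n = y + n.
Proof. intros. symmetry. apply (Z.mod_unique _ _ (-1)); lia. Qed.

Lemma B_info n j : (3 <= n)%nat -> (j < 2*n)%nat ->
  (BY n j mod (Z.of_nat n) = (if (j <=? n-3)%nat then Z.of_nat j
                     else if (j <=? 2*n-3)%nat then 2*(Z.of_nat n) - 3 - Z.of_nat j
                     else 3*(Z.of_nat n) - 3 - Z.of_nat j)) /\
  (lkey n (BX n) (BY n) j mod 2 = (if (j <=? n-3)%nat then 0
                     else if (j <=? 2*n-3)%nat then 1 else 0)).
Proof.
  intros Hn Hj. unfold lkey, BX, BY.
  destruct (Nat.leb_spec j (n-3)).
  - rewrite Z.mod_small by lia. rewrite Z.div_small by lia. simpl.
    destruct (Nat.even j); split; reflexivity.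
  - destruct (Nat.leb_spec j (2*n-3)).
    + rewrite Z.mod_small by lia. rewrite Z.div_small by lia. simpl.
      destruct (Nat.even j); split; reflexivity.
    + rewrite (mod_m1 (2 * Z.of_nat n - 3 - Z.of_nat j)) by lia. rewrite div_m1 by lia. split; [lia|]. simpl.
      destruct (Nat.even j); reflexivity.
Qed.

Lemma caseB (K n : nat) : (0 < K)%nat -> (3 <= n)%nat -> has_cylindrical_tour (2*K) n.
Proof.
  intros HK Hn.
  apply (line_tour (2*K) n (2*n) K 2 (BX n) (BY n)); try lia.
  - unfold BX. destruct (Nat.leb_spec 0 (n-3)); simpl; lia.
  - unfold BY. destruct (Nat.leb_spec 0 (n-3)); simpl; lia.
  - intros j Hj. unfold BX, BY, knight_adj. rewrite even_S.
    destruct (Nat.leb_spec j (n-3)); destruct (Nat.leb_spec (S j) (n-3));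
      destruct (Nat.even j); cbn [fst snd negb]; lia.
  - unfold BX, BY, knight_adj.
    destruct (Nat.leb_spec (2*n-1) (n-3)); [lia|].
    replace (Nat.even (2*n-1)) with false.
    + cbn [fst snd]. lia.
    + replace (2*n-1)%nat with (S (2*(n-1)))%nat by lia. rewrite even_S, Nat.even_mul. reflexivity.
  - intros j j' Hj Hj' E1 E2.
    destruct (B_info n j Hn Hj) as [F1 F2].
    destruct (B_info n j' Hn Hj') as [F1' F2'].
    rewrite F1, F1' in E1. rewrite F2, F2' in E2.
    destruct (Nat.leb_spec j (n-3)); destruct (Nat.leb_spec j' (n-3));
    destruct (Nat.leb_spec j (2*n-3)); destruct (Nat.leb_spec j' (2*n-3)); lia.
Qed.


Definition EX (j : nat) : Z := match j with 0%nat => 0 | _ => 1 end.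
Definition EY (j : nat) : Z := match j with 0%nat => 0 | _ => 2 end.

Lemma caseE (K : nat) : (0 < K)%nat -> has_cylindrical_tour (2*K) 1.
Proof.
  intros HK.
  apply (line_tour (2*K) 1 2 K 2 EX EY); try lia; try reflexivity.
  - intros j Hj. destruct j as [|[|]]; try lia. unfold knight_adj; simpl; lia.
  - unfold knight_adj; simpl; lia.
  - intros j j' Hj Hj'. destruct j as [|[|]]; destruct j' as [|[|]]; try lia;
      vm_compute; congruence.
Qed.

Definition D0pts : list (Z*Z) :=
  (0,0)::(1,2)::(3,3)::(5,4)::(7,5)::(6,3)::(8,2)::(6,1)::nil.
Definition D0X j := fst (nth j D0pts (0,0)).
Definition D0Y j := snd (nth j D0pts (0,0)).

Lemma caseD0 (K : nat) : (0 < K)%nat -> has_cylindrical_tour (4*K) 2.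
Proof.
  intros HK.
  apply (line_tour (4*K) 2 8 K 4 D0X D0Y); try lia; try reflexivity.
  - intros j Hj. do 7 (destruct j as [|j]; [unfold knight_adj; simpl; lia|]). lia.
  - unfold knight_adj; simpl; lia.
  - intros j j' Hj Hj'.
    do 8 (destruct j as [|j]; [do 8 (destruct j' as [|j']; [vm_compute; congruence|]); lia|]).
    lia.
Qed.

Definition Fw (m : nat) (i : nat) : Z*Z :=
  match i with
  | 0%nat => (0,0)
  | 1%nat => (-1,2)
  | _ => if (i <? m)%nat then (Z.of_nat i - 1, if Nat.even i then 1 else 3) else (Z.of_nat m, 0)
  end.

Lemma caseF (h : nat) : has_cylindrical_tour (2*h+3) 1.
Proof.
  set (m := (2*h+3)%nat).
  apply (tour_of m 1 (Fw m)); try lia.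
  - reflexivity.
  - intros i Hi. rewrite Nat.mul_1_r in Hi.
    destruct i as [|[|i]].
    + unfold Fw, knight_adj. simpl. lia.
    + unfold Fw, knight_adj. cbn [fst snd].
      destruct (Nat.ltb_spec 2 m); [|lia]. simpl. lia.
    + unfold Fw. destruct (Nat.ltb_spec (S (S i)) m); [|lia].
      destruct (Nat.ltb_spec (S (S (S i))) m).
      * unfold knight_adj. cbn [fst snd]. rewrite (Nat.even_succ (S (S i))), <- Nat.negb_even.
        destruct (Nat.even (S (S i))); cbn [negb]; lia.
      * assert (S (S (S i)) = m) by lia.
        assert (HE : Nat.even (S (S i)) = true).
        { replace (S (S i)) with (2*(h+1))%nat by lia. apply Nat.even_mul. }
        rewrite HE. unfold knight_adj. cbn [fst snd]. lia.
  - left. rewrite Nat.mul_1_r. unfold Fw. subst m. replace (2*h+3)%nat with (S (S (2*h+1))) by lia.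
    destruct (Nat.ltb_spec (S (S (2*h+1))) (S (S (2*h+1)))); [lia|]. reflexivity.
  - assert (Fcf : forall i, (i < m)%nat ->
      cfx (Z.of_nat m) 1 (Fw m i) = (Z.of_nat m - Z.of_nat i) mod Z.of_nat m).
    { intros i Hi. destruct i as [|[|i]].
      + unfold Fw, cfx. cbn [fst snd]. change (Z.even (0/1)) with true. cbv iota.
        replace (Z.of_nat m - Z.of_nat 0) with (0 + 1*Z.of_nat m) by lia.
        rewrite Z.mod_add by lia. reflexivity.
      + unfold Fw, cfx. cbn [fst snd]. change (Z.even (2/1)) with true. cbv iota.
        replace (Z.of_nat m - Z.of_nat 1) with (-1 + 1*Z.of_nat m) by lia.
        rewrite Z.mod_add by lia. reflexivity.
      + unfold Fw. destruct (Nat.ltb_spec (S (S i)) m); [|lia].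
        unfold cfx. cbn [fst snd].
        destruct (Nat.even (S (S i))); cbn [Z.div]; (change (Z.even (1/1)) with false || change (Z.even (3/1)) with false); cbv iota;
          f_equal; lia. }
    intros i j Hi Hj _ Ex. rewrite Nat.mul_1_r in Hi, Hj.
    change (Z.of_nat 1) with 1 in Ex. rewrite (Fcf i Hi), (Fcf j Hj) in Ex.
    apply mod_eq_diff in Ex; [|lia]. destruct Ex as [t Et].
    destruct (Z.lt_trichotomy t 0) as [Ht|[Ht|Ht]]; nia.
Qed.


Definition D2base (t : nat) : Z*Z :=
  match t with
  | 0 => (0,0)%Z | 1 => (1,2)%Z | 2 => (2,4)%Z | 3 => (4,5)%Z
  | 4 => (3,3)%Z | 5 => (5,4)%Z | 6 => (6,6)%Z | 7 => (4,7)%Z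
  | 8 => (3,5)%Z | 9 => (5,6)%Z | 10 => (6,4)%Z | 11 => (8,5)%Z
  | 12 => (3,3)%Z | 13 => (5,4)%Z | 14 => (4,2)%Z | 15 => (6,1)%Z
  | 16 => (8,2)%Z | 17 => (6,3)%Z | 18 => (7,1)%Z | 19 => (8,-1)%Z
  | _ => (6,0)%Z end%nat.

Definition D2cell (t q : nat) : Z*Z :=
  (fst (D2base t) + 4 * Z.of_nat q, snd (D2base t)).

Definition D2w (k i : nat) : Z*Z :=
  if (i <? 4)%nat then D2cell i 0
  else if (i <? 4 + 8*k)%nat then D2cell (4 + (i-4) mod 8) ((i-4)/8)
  else D2cell (12 + (i - 4 - 8*k)) k.

Definition valid (k t q : nat) : Prop :=
  ((t < 4 /\ q = 0) \/ (4 <= t < 12 /\ q < k) \/ (12 <= t <= 20 /\ q = k))%nat.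

Definition idx (k t q : nat) : nat :=
  if (t <? 4)%nat then t else if (t <? 12)%nat then (4 + 8*q + (t-4))%nat
  else (4 + 8*k + (t-12))%nat.

Lemma D2_decomp k i : (i <= 8*k+12)%nat ->
  exists t q, valid k t q /\ i = idx k t q /\ D2w k i = D2cell t q.
Proof.
  intro Hi. unfold D2w.
  destruct (Nat.ltb_spec i 4).
  - exists i, 0%nat. unfold valid, idx. destruct (Nat.ltb_spec i 4); [|lia]. split; [lia|auto].
  - destruct (Nat.ltb_spec i (4+8*k)).
    + pose proof (Nat.div_mod (i-4) 8 ltac:(lia)).
      pose proof (Nat.mod_upper_bound (i-4) 8 ltac:(lia)).
      assert ((i-4)/8 < k)%nat by (apply Nat.Div0.div_lt_upper_bound; lia).
      exists (4 + (i-4) mod 8)%nat, ((i-4)/8)%nat. unfold valid, idx.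
      destruct (Nat.ltb_spec (4 + (i-4) mod 8) 4); [lia|].
      destruct (Nat.ltb_spec (4 + (i-4) mod 8) 12); [|lia]. split; [lia|split; [lia|auto]].
    + exists (12 + (i - 4 - 8*k))%nat, k. unfold valid, idx.
      destruct (Nat.ltb_spec (12 + (i - 4 - 8*k)) 4); [lia|].
      destruct (Nat.ltb_spec (12 + (i - 4 - 8*k)) 12); [lia|]. split; [lia|split; [lia|auto]].
Qed.

Lemma D2_succ k t q t' q' : valid k t q -> valid k t' q' ->
  idx k t' q' = S (idx k t q) ->
  (t' = S t /\ q' = q /\ t <> 3%nat /\ t <> 11%nat) \/ (t = 3%nat /\ t' = 4%nat /\ q' = 0%nat) \/
  (t = 3%nat /\ t' = 12%nat /\ q' = 0%nat) \/
  (t = 11%nat /\ t' = 4%nat /\ q' = S q) \/ (t = 11%nat /\ t' = 12%nat /\ q' = S q).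
Proof.
  unfold valid, idx. intros H1 H2 E.
  destruct (Nat.ltb_spec t 4); destruct (Nat.ltb_spec t 12);
  destruct (Nat.ltb_spec t' 4); destruct (Nat.ltb_spec t' 12); lia.
Qed.

Lemma D2_adj k i : (i < 8*k+12)%nat -> knight_adj (D2w k i) (D2w k (S i)).
Proof.
  intro Hi.
  destruct (D2_decomp k i ltac:(lia)) as [t [q [V [Ei Wi]]]].
  destruct (D2_decomp k (S i) ltac:(lia)) as [t' [q' [V' [Ei' Wi']]]].
  rewrite Wi, Wi'.
  assert (Ht : t <> 20%nat).
  { intro. subst t. unfold idx in Ei. simpl in Ei. unfold valid in V. lia. }
  destruct (D2_succ k t q t' q' V V' ltac:(lia)) as
    [[-> [-> [H3 H11]]]|[[-> [-> ->]]|[[-> [-> ->]]|[[-> [-> ->]]|[-> [-> ->]]]]]].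
  - unfold D2cell, knight_adj. cbn [fst snd].
    unfold valid in V. do 20 (destruct t as [|t]; [cbn [D2base fst snd]; lia|]). lia.
  - unfold D2cell, knight_adj. unfold valid in V. cbn [D2base fst snd]. lia.
  - unfold D2cell, knight_adj. unfold valid in V. cbn [D2base fst snd]. lia.
  - unfold D2cell, knight_adj. cbn [D2base fst snd]. lia.
  - unfold D2cell, knight_adj. cbn [D2base fst snd]. lia.
Qed.

Definition D2row (t : nat) : Z :=
  match t with
  | 0 | 1 | 2 | 5 | 6 | 9 | 10 | 13 | 14 | 16 => 0%Z
  | _ => 1%Z end%nat.

Definition D2val (k t q : nat) : Z :=
  let M := (4 * Z.of_nat k + 6)%Z in
  let Q := Z.of_nat q in
  match t with
  | 0 => 0%Z | 1 => (M-2)%Z | 2 => 2%Z | 3 => 4%Z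
  | 4 => (M-4-4*Q)%Z | 5 => (5+4*Q)%Z | 6 => (M-7-4*Q)%Z | 7 => (M-5-4*Q)%Z
  | 8 => (3+4*Q)%Z | 9 => (M-6-4*Q)%Z | 10 => (6+4*Q)%Z | 11 => (8+4*Q)%Z
  | 12 => 2%Z | 13 => (M-1)%Z | 14 => 1%Z | 15 => 0%Z | 16 => (M-3)%Z | 17 => (M-1)%Z
  | 18 => 1%Z | _ => (M-3)%Z end%nat.

Lemma modv (c a v M : Z) : 0 <= v < M -> a = v + c*M -> a mod M = v.
Proof. intros H E. subst a. rewrite Z.mod_add by lia. apply Z.mod_small; lia. Qed.

Lemma D2_cf k t q : valid k t q -> (t < 20)%nat ->
  cfr 2 (D2cell t q) = D2row t /\
  cfx (4 * Z.of_nat k + 6) 2 (D2cell t q) = D2val k t q.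
Proof.
  unfold valid. intros V Ht. unfold cfr, cfx, D2cell.
  do 20 (destruct t as [|t];
    [cbn [D2base fst snd D2row D2val]; split; [reflexivity|];
     cbv beta iota zeta; cbn [Z.even Z.div Z.div_eucl Z.pos_div_eucl];
     first [apply (modv 0); lia | apply (modv 1); lia | apply (modv (-1)); lia]|]).
  lia.
Qed.

Lemma D2_inj k t q t' q' : valid k t q -> valid k t' q' -> (t < 20)%nat -> (t' < 20)%nat ->
  D2row t = D2row t' -> D2val k t q = D2val k t' q' -> t = t' /\ q = q'.
Proof.
  unfold valid. intros V V' Ht Ht' Er Ev.
  do 20 (destruct t as [|t];
    [do 20 (destruct t' as [|t']; [cbn [D2row D2val] in Er, Ev; lia|]); lia|]).
  lia.
Qed.

Lemma caseD2 (k : nat) : has_cylindrical_tour (4*k+6) 2.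
Proof.
  apply (tour_of (4*k+6) 2 (D2w k)); try lia.
  - reflexivity.
  - intros i Hi. apply D2_adj. lia.
  - left. destruct (D2_decomp k (8*k+12) ltac:(lia)) as [t [q [V [Ei Wi]]]].
    replace ((4*k+6)*2)%nat with (8*k+12)%nat by lia. rewrite Wi.
    unfold valid, idx in *.
    destruct (Nat.ltb_spec t 4); destruct (Nat.ltb_spec t 12); try lia.
    assert (t = 20%nat) by lia. subst t. assert (q = k) by lia. subst q.
    unfold D2cell. cbn [D2base fst snd]. f_equal. lia.
  - intros i j Hi Hj Er Ex.
    destruct (D2_decomp k i ltac:(lia)) as [t [q [V [Ei Wi]]]].
    destruct (D2_decomp k j ltac:(lia)) as [t' [q' [V' [Ej Wj]]]].
    assert (Ht : (t < 20)%nat).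
    { unfold valid, idx in *. destruct (Nat.ltb_spec t 4); destruct (Nat.ltb_spec t 12); lia. }
    assert (Ht' : (t' < 20)%nat).
    { unfold valid, idx in *. destruct (Nat.ltb_spec t' 4); destruct (Nat.ltb_spec t' 12); lia. }
    rewrite Wi, Wj in Er, Ex.
    replace (Z.of_nat (4*k+6)) with (4 * Z.of_nat k + 6) in Ex by lia.
    change (Z.of_nat 2) with 2 in Er, Ex.
    destruct (D2_cf k t q V Ht) as [R1 X1].
    destruct (D2_cf k t' q' V' Ht') as [R2 X2].
    destruct (D2_inj k t q t' q' V V' Ht Ht'); try congruence.
Qed.


Lemma parity_inv (w : nat -> Z*Z) N : w 0%nat = (0,0) ->
  (forall i, (i < N)%nat -> knight_adj (w i) (w (S i))) ->
  forall i, (i <= N)%nat -> (fst (w i) + snd (w i) - Z.of_nat i) mod 2 = 0.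
Proof.
  intros H0 Hadj. induction i; intro Hi.
  - rewrite H0. reflexivity.
  - specialize (IHi ltac:(lia)). specialize (Hadj i ltac:(lia)).
    unfold knight_adj in Hadj. rewrite Nat2Z.inj_succ. Z.div_mod_to_equations. lia.
Qed.

Lemma no_odd_even (m n : nat) : Nat.Odd m -> Nat.Even n -> ~ has_cylindrical_tour m n.
Proof.
  intros [a Ha] [b Hb] [w [[H0 [Hadj _]] Hend]].
  pose proof (parity_inv w (m*n) H0 Hadj (m*n) ltac:(lia)) as P.
  assert (HZ : Z.of_nat (m*n) = 2 * (Z.of_nat m * Z.of_nat b)) by (subst n; lia).
  assert (HM : Z.of_nat m = 2 * Z.of_nat a + 1) by (subst m; lia).
  rewrite HZ in P.
  destruct Hend as [E|E]; rewrite E in P; cbn [fst snd] in P; rewrite HM in P.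
  - replace (2 * Z.of_nat a + 1 + 0 - 2 * ((2 * Z.of_nat a + 1) * Z.of_nat b))
      with (1 + 2 * (Z.of_nat a - (2 * Z.of_nat a + 1) * Z.of_nat b)) in P by ring.
    Z.div_mod_to_equations. lia.
  - replace (- (2 * Z.of_nat a + 1) + 0 - 2 * ((2 * Z.of_nat a + 1) * Z.of_nat b))
      with (1 + 2 * (- Z.of_nat a - 1 - (2 * Z.of_nat a + 1) * Z.of_nat b)) in P by ring.
    Z.div_mod_to_equations. lia.
Qed.

Lemma mod2_eq x y : (x - y) mod 2 = 0 -> x mod 2 = y mod 2.
Proof. intros. Z.div_mod_to_equations. lia. Qed.

Lemma loop22 p q : Z.abs (fst p - fst q) = 1 -> Z.abs (snd p - snd q) = 2 ->
  cfr 2 p = cfr 2 q /\ cfx 2 2 p = cfx 2 2 q.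
Proof.
  destruct p as [a b], q as [c d]. cbn [fst snd]. intros H1 H2.
  assert (Hd : d = b + 1*2 \/ d = b + (-1)*2) by lia.
  unfold cfr, cfx; cbn [fst snd].
  destruct Hd as [-> | ->]; rewrite Z.mod_add, Z.div_add by lia; split; auto;
    rewrite Z.even_add; change (Z.even 1) with false; change (Z.even (-1)) with false;
    destruct (Z.even (b/2)); cbv [Bool.eqb]; apply mod2_eq; Z.div_mod_to_equations; lia.
Qed.

Lemma cf_eq_orbit m n p q : 0 < m -> 0 < n -> cfr n p = cfr n q -> cfx m n p = cfx m n q ->
  same_orbit m n p q.
Proof.
  intros Hm Hn E1 E2. eapply rst_trans. apply orbit_canon; auto.
  rewrite E1, E2. apply rst_sym, orbit_canon; auto.
Qed.

Lemma no22 : ~ has_cylindrical_tour 2 2.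
Proof.
  intros [w [[H0 [Hadj [Hdist [_ Hret]]]] Hend]].
  assert (Hstep : forall i, (i < 4)%nat -> Z.abs (fst (w i) - fst (w (S i))) = 2).
  { intros i Hi. pose proof (Hadj i Hi) as A. unfold knight_adj in A.
    destruct A as [[A1 A2]|[A1 A2]]; auto. exfalso.
    destruct (loop22 _ _ A1 A2) as [E1 E2].
    assert (O : same_orbit 2 2 (w i) (w (S i))) by (apply cf_eq_orbit; auto; lia).
    destruct (Nat.lt_ge_cases (S i) 4).
    - specialize (Hdist i (S i) Hi H O). lia.
    - assert (S i = 4)%nat by lia. rewrite H1 in O.
      assert (O' : same_orbit 2 2 (w i) (w 0%nat)) by (eapply rst_trans; eauto).
      specialize (Hdist i 0%nat Hi ltac:(lia) O'). lia. }
  pose proof (Hstep 0%nat ltac:(lia)). pose proof (Hstep 1%nat ltac:(lia)).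
  pose proof (Hstep 2%nat ltac:(lia)). pose proof (Hstep 3%nat ltac:(lia)).
  simpl in Hend. rewrite H0 in *. cbn [fst] in *.
  destruct Hend as [E|E]; rewrite E in *; cbn [fst] in *; lia.
Qed.

Close Scope Z_scope.


Theorem theorem6p2 (m n : nat) :
  (0 < m)%nat -> (0 < n)%nat -> (1 < m \/ 1 < n)%nat ->
  (has_cylindrical_tour m n <->
     ~ (m = 2%nat /\ n = 2%nat) /\ ~ (Nat.Odd m /\ Nat.Even n)).
Proof.
  intros Hm Hn H1. split.
  - intros T. split.
    + intros [-> ->]. exact (no22 T).
    + intros [Ho He]. exact (no_odd_even m n Ho He T).
  - intros [N22 Nodd].
    destruct (Nat.Even_or_Odd m) as [[K HK]|[a Ha]].
    +
      subst m.
      destruct (Nat.eq_dec n 1) as [->|Hn1].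
      * apply caseE. lia.
      * destruct (Nat.eq_dec n 2) as [->|Hn2].
        -- destruct (Nat.Even_or_Odd K) as [[K' HK']|[j Hj]]; subst K.
           ++ replace (2*(2*K'))%nat with (4*K')%nat by lia. apply caseD0. lia.
           ++ assert (1 <= j)%nat by lia.
              replace (2*(2*j+1))%nat with (4*(j-1)+6)%nat by lia. apply caseD2.
        -- apply caseB; lia.
    +
      subst m.
      destruct (Nat.Even_or_Odd n) as [[b Hb]|[h Hh]].
      * exfalso. apply Nodd. split; [exists a; reflexivity|exists b; exact Hb].
      * subst n. destruct (Nat.eq_dec h 0) as [->|Hh0].
        -- assert (1 <= a)%nat by lia.
           replace (2*a+1)%nat with (2*(a-1)+3)%nat by lia. apply caseF.
        -- apply caseA; lia.
Qed.
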